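(* Let $p$ be a positive integer and write $2p=3m+r$ with $r\in\{0,1,2\}$, and assume $m\ge 3$. Let $I$ be a configuration of $2p$ colored chips containing at least $m$ chips of each of the three colors (and no jokers or dominoes). Then there is a sequence of at most $p+4r+8\le p+16$ exchanges taking $I$ to a configuration with at least $p$ dominoes.
   Context: Game model: a configuration is a tuple $(a,b,c,x,d)$ of nonnegative integers: $a,b,c$ colored chips of three colors, $x$ jokers, $d$ dominoes. Exchanges: Rule 1: remove three chips, consisting of some number $j\in\{0,1,2,3\}$ of jokers together with $3-j$ colored chips of pairwise distinct colors, and add one domino and one joker. Rule 2: if $d\ge 3$, remove three dominoes and add seven jokers. *)

(* Defs.v *)
From Stdlib Require Import Arith Lia.

Record config : Type := Config {
  col_a : nat; col_b : nat; col_c : nat; jokers : nat; dominoes : nat }.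

(* Rule 1: remove j jokers and 3 - j colored chips of pairwise distinct colors
   (ua, ub, uc in {0,1} indicate which colors are used), add one domino and
   one joker. *)
Inductive exchange : config -> config -> Prop :=
| rule1 (a b c x d ua ub uc j : nat) :
    ua <= 1 -> ub <= 1 -> uc <= 1 -> ua + ub + uc + j = 3 ->
    ua <= a -> ub <= b -> uc <= c -> j <= x ->
    exchange (Config a b c x d) (Config (a - ua) (b - ub) (c - uc) (x - j + 1) (d + 1))
| rule2 (a b c x d : nat) :
    3 <= d ->
    exchange (Config a b c x d) (Config a b c (x + 7) (d - 3)).

Inductive exchanges : nat -> config -> config -> Prop :=
| ex_refl (I : config) : exchanges 0 I I
| ex_step (n : nat) (I J K : config) :
    exchange I J -> exchanges n J K -> exchanges (S n) I K.

(* Main.v *)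
Require Import Defs.
From Stdlib Require Import Arith Lia.

Lemma ex_cat n n' I J K : exchanges n I J -> exchanges n' J K -> exchanges (n + n') I K.
Proof. induction 1; intros; simpl; [assumption|]. econstructor; eauto. Qed.

Lemma phase1 k : forall a b c x d, k <= a -> k <= b -> k <= c ->
  exchanges k (Config a b c x d) (Config (a-k) (b-k) (c-k) (x+k) (d+k)).
Proof.
  induction k; intros a b c x d Ha Hb Hc.
  - replace (Config (a-0) (b-0) (c-0) (x+0) (d+0)) with (Config a b c x d)
      by (f_equal; lia). constructor.
  - eapply ex_step. apply (rule1 a b c x d 1 1 1 0); lia.
    replace (Config (a - S k) (b - S k) (c - S k) (x + S k) (d + S k)) with
      (Config (a-1-k) (b-1-k) (c-1-k) (x-0+1+k) (d+1+k)) by (f_equal; lia).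
    apply IHk; lia.
Qed.

Lemma leftA a : forall b c x d, a + 1 <= x ->
  exchanges a (Config a b c x d) (Config 0 b c (x-a) (d+a)).
Proof.
  induction a; intros b c x d H.
  - replace (Config 0 b c (x-0) (d+0)) with (Config 0 b c x d) by (f_equal; lia). constructor.
  - eapply ex_step. apply (rule1 (S a) b c x d 1 0 0 2); lia.
    replace (Config 0 b c (x - S a) (d + S a)) with
      (Config 0 (b-0) (c-0) (x-2+1-a) (d+1+a)) by (f_equal; lia).
    replace (S a - 1) with a by lia.
    apply IHa; lia.
Qed.

Lemma leftB b : forall c x d, b + 1 <= x ->
  exchanges b (Config 0 b c x d) (Config 0 0 c (x-b) (d+b)).
Proof.
  induction b; intros c x d H.
  - replace (Config 0 0 c (x-0) (d+0)) with (Config 0 0 c x d) by (f_equal; lia). constructor.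
  - eapply ex_step. apply (rule1 0 (S b) c x d 0 1 0 2); lia.
    replace (Config 0 0 c (x - S b) (d + S b)) with
      (Config (0-0) 0 (c-0) (x-2+1-b) (d+1+b)) by (f_equal; lia).
    replace (S b - 1) with b by lia.
    apply IHb; lia.
Qed.

Lemma leftC c : forall x d, c + 1 <= x ->
  exchanges c (Config 0 0 c x d) (Config 0 0 0 (x-c) (d+c)).
Proof.
  induction c; intros x d H.
  - replace (Config 0 0 0 (x-0) (d+0)) with (Config 0 0 0 x d) by (f_equal; lia). constructor.
  - eapply ex_step. apply (rule1 0 0 (S c) x d 0 0 1 2); lia.
    replace (Config 0 0 0 (x - S c) (d + S c)) with
      (Config (0-0) (0-0) 0 (x-2+1-c) (d+1+c)) by (f_equal; lia).
    replace (S c - 1) with c by lia.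
    apply IHc; lia.
Qed.

Lemma jok k : forall x d, 2 * k + 1 <= x ->
  exchanges k (Config 0 0 0 x d) (Config 0 0 0 (x - 2 * k) (d + k)).
Proof.
  induction k; intros x d H.
  - replace (Config 0 0 0 (x-2*0) (d+0)) with (Config 0 0 0 x d) by (f_equal; lia). constructor.
  - eapply ex_step. apply (rule1 0 0 0 x d 0 0 0 3); lia.
    replace (Config 0 0 0 (x - 2 * S k) (d + S k)) with
      (Config (0-0) (0-0) (0-0) (x-3+1-2*k) (d+1+k)) by (f_equal; lia).
    apply IHk; lia.
Qed.

Theorem mainTheorem8 (p m r a b c : nat) :
  0 < p -> 2 * p = 3 * m + r -> r <= 2 -> 3 <= m ->
  a + b + c = 2 * p -> m <= a -> m <= b -> m <= c ->
  exists (n : nat) (J : config),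
    n <= p + 4 * r + 8 /\ p + 4 * r + 8 <= p + 16 /\
    exchanges n (Config a b c 0 0) J /\ p <= dominoes J.
Proof.
  intros Hp Hpm Hr Hm Hs Ha Hb Hc.
  pose (a' := a - m). pose (b' := b - m). pose (c' := c - m).
  assert (Hr' : a' + b' + c' = r) by (unfold a', b', c'; lia).
  assert (Hmr : r + 1 <= m) by lia.
  pose (k := p - m - r + 3).
  exists (m + (a' + (b' + (c' + (1 + k))))),
    (Config 0 0 0 (m - r + 7 - 2 * k) (m + r - 3 + k)).
  split; [unfold k; lia|]. split; [lia|]. split; [|simpl; unfold k; lia].
  apply ex_cat with (J := Config a' b' c' m m).
  { replace (Config a' b' c' m m) with (Config (a-m) (b-m) (c-m) (0+m) (0+m)) by (f_equal; lia).
    apply phase1; lia. }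
  apply ex_cat with (J := Config 0 b' c' (m - a') (m + a')).
  { apply leftA; lia. }
  apply ex_cat with (J := Config 0 0 c' (m - a' - b') (m + a' + b')).
  { apply leftB; lia. }
  apply ex_cat with (J := Config 0 0 0 (m - r) (m + r)).
  { replace (Config 0 0 0 (m - r) (m + r)) with
      (Config 0 0 0 (m - a' - b' - c') (m + a' + b' + c')) by (f_equal; lia).
    apply leftC; lia. }
  eapply ex_step.
  { apply rule2; lia. }
  replace (Config 0 0 0 (m - r + 7 - 2 * k) (m + r - 3 + k)) with
    (Config 0 0 0 (m - r + 7 - 2 * k) (m + r - 3 + k)) by reflexivity.
  apply jok. unfold k; lia.
Qed.
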